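(* Let ${\mathcal M}$ be a $q$-matroid on $E=\mathbb{F}_q^n$ of rank $r$. If there is no nonzero vector of $E$ lying in all the bases of ${\mathcal M}$, then $\chi(I_{{\mathcal M}})\neq0$.
   Context: A $q$-matroid is a pair $(E,\rho)$, $E=\mathbb{F}_q^n$, with $\rho$ from the set of subspaces of $E$ to $\mathbb{Z}_{\ge0}$ satisfying $0\le\rho(X)\le\dim X$, monotonicity under inclusion, and $\rho(X+Y)+\rho(X\cap Y)\le\rho(X)+\rho(Y)$; its rank is $\rho(E)$. A subspace $U$ is independent if $\rho(U)=\dim U$; a basis is a maximal independent subspace. The order complex $I_{{\mathcal M}}$ is the simplicial complex whose faces are the chains $V_1\subsetneq\cdots\subsetneq V_k$ ($k\ge0$, empty chain included) of nonzero independent subspaces, and $\chi(I_{{\mathcal M}})=\sum_{k\ge0}(-1)^{k-1}f_k$, where $f_k$ is the number of such chains with $k$ members. *)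

(* Defs.v *)
From HB Require Import structures.
From mathcomp Require Import all_boot all_order all_algebra all_field.
Set Implicit Arguments. Unset Strict Implicit. Unset Printing Implicit Defensive.
Import GRing.Theory Num.Theory.
Import vector.VectorInternalTheory.

(* E = F^n with F a finite field (F = F_q); subspaces of E are {vspace 'rV[F]_n}. *)
Notation qspace F n := {vspace 'rV[F]_n}.

HB.instance Definition _ (F : finFieldType) (n : nat) :=
  [Countable of qspace F n by <:].
HB.instance Definition _ (F : finFieldType) (n : nat) :=
  [Finite of qspace F n by <:].

Section QMatroid.
Variables (F : finFieldType) (n : nat).
Local Open Scope ring_scope.

Definition is_qmatroid (rho : qspace F n -> nat) : Prop :=
  [/\ (forall X : qspace F n, (rho X <= \dim X)%N),
      (forall X Y : qspace F n, (X <= Y)%VS -> (rho X <= rho Y)%N) &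
      (forall X Y : qspace F n,
         (rho (X + Y)%VS + rho (X :&: Y)%VS <= rho X + rho Y)%N)].

Definition qindependent (rho : qspace F n -> nat) (U : qspace F n) : bool :=
  rho U == \dim U.

Definition qbasis (rho : qspace F n -> nat) (B : qspace F n) : Prop :=
  qindependent rho B /\
  (forall U : qspace F n, qindependent rho U -> (B <= U)%VS -> U = B).

Definition vproper (U V : qspace F n) : bool := (U <= V)%VS && (U != V).

Definition nchains (rho : qspace F n -> nat) (k : nat) : nat :=
  #|[set t : k.-tuple (qspace F n) |
      all (fun V => (V != 0%VS) && qindependent rho V) t && sorted vproper t]|.

(* chi(I_M) = sum_{k >= 0} (-1)^(k-1) f_k ; f_k = 0 once k exceeds the
   number of subspaces (a chain has pairwise distinct members). *)
Definition chi_order_complex (rho : qspace F n -> nat) : int :=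
  \sum_(k < #|{: qspace F n}|.+2) (-1) ^+ k.+1 * (nchains rho k)%:Z.

End QMatroid.

(* Main.v *)
From HB Require Import structures.
Require Import Defs.
From mathcomp Require Import all_boot all_order all_algebra all_field.
From mathcomp Require Import zify.
Set Implicit Arguments. Unset Strict Implicit. Unset Printing Implicit Defensive.
Import Order.TTheory GRing.Theory Num.Theory.

Lemma sum_tupleS (T : finType) k (G : seq T -> nat) :
  (\sum_(t : k.+1.-tuple T) G t = \sum_(x : T) \sum_(s : k.-tuple T) G (x :: s))%N.
Proof.
rewrite [RHS]pair_big /= (reindex (fun p : T * k.-tuple T => [tuple of p.1 :: p.2])) //=.
exists (fun t => (thead t, [tuple of behead t])) => [[x s]|t] _ /=.
  by congr (_, _); apply: val_inj.
by case: t / tupleP => x s; apply: val_inj.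
Qed.

Lemma sum_tuple0 (T : finType) (G : seq T -> nat) :
  (\sum_(t : 0.-tuple T) G t = G [::])%N.
Proof.
rewrite (eq_bigr (fun _ => G [::])) ?sum_nat_const ?card_tuple ?expn0 ?mul1n //.
by move=> t _; rewrite tuple0.
Qed.

Section QM.
Variables (F : finFieldType) (n : nat) (rho : qspace F n -> nat).
Hypothesis hM : is_qmatroid rho.
Local Notation V := (qspace F n).

Lemma rho_le X : (rho X <= \dim X)%N. Proof. by case: hM. Qed.
Lemma rho_mono X Y : (X <= Y)%VS -> (rho X <= rho Y)%N. Proof. by case: hM => _ H _; apply: H. Qed.
Lemma rho_sub X Y : (rho (X + Y)%VS + rho (X :&: Y)%VS <= rho X + rho Y)%N.
Proof. by case: hM. Qed.

Lemma rho_diff X Y : (X <= Y)%VS -> (rho Y + \dim X <= rho X + \dim Y)%N.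
Proof.
move=> XY; set C := (Y :\: X)%VS.
have eY : (X + C)%VS = Y.
  apply/eqP; rewrite eqEsubv subv_add XY diffvSl /=.
  by rewrite -{1}(addv_diff_cap Y X) addvC addvS // capvSr.
have dC : (\dim Y = \dim X + \dim C)%N.
  have := dimv_sum_cap X C; rewrite eY capvC capv_diff dimv0 addn0 => ->//.
have := rho_sub X C; rewrite eY capvC capv_diff.
have := rho_le C; rewrite dC. lia.
Qed.

Lemma indep_sub X Y : (X <= Y)%VS -> qindependent rho Y -> qindependent rho X.
Proof.
move=> XY /eqP hY; apply/eqP; have := rho_diff XY; have := rho_le X; rewrite hY; lia.
Qed.

Lemma dimr_return A A' p : (A <= A')%VS ->
  (rho (A' + p)%VS + rho A <= rho (A + p)%VS + rho A')%N.
Proof.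
move=> AA'; have := rho_sub (A + p)%VS A'.
have -> : (A + p + A')%VS = (A' + p)%VS.
  apply/eqP; rewrite eqEsubv; apply/andP; split.
    by rewrite !subv_add addvSl addvSr (subv_trans AA') ?addvSl.
  by rewrite subv_add addvSr (subv_trans (addvSr A p)) ?addvSl.
have := rho_mono (_ : (A <= (A + p) :&: A')%VS).
rewrite subv_cap addvSl AA' => /(_ isT); lia.
Qed.

Local Open Scope ring_scope.
Implicit Types (Z X Y A p : V) (Q T R : {set V}).
Definition vs (T : {set V}) : V := (\sum_(X in T) X)%VS.
Definition lines : {set V} := [set X : V | \dim X == 1%N].
Definition fZ (Z : V) (Q : {set V}) : int :=
  \sum_(T : {set V} | T \subset Q)
     (if qindependent rho (Z + vs T)%VS then (-1) ^+ #|T| else 0).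
Definition gZ (Z : V) (Q : {set V}) : int :=
  (-1) ^+ (rho (Z + vs Q)%VS - \dim Z) * fZ Z Q.

Lemma sum_split (G : {set V} -> int) (Q : {set V}) p : p \in Q ->
  \sum_(T : {set V} | T \subset Q) G T =
  \sum_(T : {set V} | T \subset Q :\ p) (G T + G (p |: T)).
Proof.
move=> pQ; rewrite big_split /=.
rewrite [LHS](bigID (fun T : {set V} => p \in T) (fun T : {set V} => T \subset Q)) /= addrC; congr (_ + _).
  by apply: eq_bigl => T; rewrite subsetD1.
rewrite (reindex_onto (fun T => p |: T) (fun T => T :\ p)) /=; last first.
  by move=> T /andP[_ pT]; rewrite setD1K.
apply: eq_bigl => T; rewrite subUset sub1set pQ setU11 andbT /=.
rewrite subsetD1; case pT: (p \in T) => /=.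
  rewrite andbF; apply/negbTE/nandP; right; apply/eqP => /setP /(_ p).
  by rewrite !inE eqxx pT.
by rewrite setU1K ?pT // eqxx !andbT.
Qed.

Lemma vsU1 (p : V) (T : {set V}) : p \notin T -> vs (p |: T) = (p + vs T)%VS.
Proof. by move=> pT; rewrite /vs big_setU1. Qed.

Lemma fZ_split Z Q p : p \in Q -> fZ Z Q = fZ Z (Q :\ p) - fZ (Z + p)%VS (Q :\ p).
Proof.
move=> pQ; rewrite /fZ (sum_split _ pQ) big_split /= -sumrN; congr (_ + _).
apply: eq_bigr => T; rewrite subsetD1 => /andP[_ pT].
rewrite vsU1 // addvA cardsU1 pT add1n exprS.
by case: ifP => _; rewrite ?mulN1r ?oppr0.
Qed.

Lemma dim_addl Z p : \dim p = 1%N -> ~~ (p <= Z)%VS -> \dim (Z + p) = (\dim Z).+1.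
Proof.
move=> dp pZ; have := dimv_sum_cap Z p; rewrite dp.
have : (\dim (Z :&: p) <= 1)%N by rewrite -[X in (_ <= X)%N]dp dimvS // capvSr.
case E: (\dim (Z :&: p)) => [|[|//]] _; first by rewrite addn0 addn1.
have /eqP Ep : (Z :&: p == p)%VS by rewrite eqEdim capvSr dp E.
by case/negP: pZ; rewrite -Ep capvSl.
Qed.

Lemma dim_add_le Z p : (\dim (Z + p) <= \dim Z + \dim p)%N.
Proof. by rewrite -dimv_sum_cap leq_addr. Qed.

Lemma vs_sub T Q : T \subset Q -> (vs T <= vs Q)%VS.
Proof.
move=> TQ; apply/subv_sumP => X XT; apply: (sumv_sup X) => //.
exact: (subsetP TQ).
Qed.

Lemma mem_vs X Q : X \in Q -> (X <= vs Q)%VS.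
Proof. by move=> XQ; apply: (sumv_sup X). Qed.

Lemma vsD1 p Q : p \in Q -> vs Q = (p + vs (Q :\ p))%VS.
Proof. by move=> pQ; rewrite /vs (big_setD1 p pQ). Qed.

Lemma fZ_dep Z Q : ~~ qindependent rho Z -> fZ Z Q = 0.
Proof.
move=> hZ; apply: big1 => T _; case: ifP => // hT.
by case/negP: hZ; apply: indep_sub hT; apply: addvSl.
Qed.

Lemma fZ0 Z : qindependent rho Z -> fZ Z set0 = 1.
Proof.
move=> hZ; rewrite /fZ (big_pred1 set0) ?cards0 /vs ?big_set0 ?addv0 ?hZ //.
by move=> T; rewrite subset0.
Qed.

Lemma fZ_cone Z Q p :
  (forall T, T \subset Q -> qindependent rho (Z + vs T) = qindependent rho (Z + p + vs T)) ->
  fZ Z Q = fZ (Z + p) Q.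
Proof. by move=> H; apply: eq_bigr => T /H ->. Qed.

Lemma gZ_step Z Q p : qindependent rho Z -> p \in lines -> p \in Q -> ~~ (p <= Z)%VS ->
  rho (Z + vs (Q :\ p)) = rho (Z + vs Q) ->
  gZ Z Q = gZ Z (Q :\ p) + (if qindependent rho (Z + p) then gZ (Z + p) (Q :\ p) else 0).
Proof.
move=> hZ; rewrite inE => /eqP dp pQ pZ hR.
have eQ : (Z + p + vs (Q :\ p))%VS = (Z + vs Q)%VS by rewrite (vsD1 pQ) addvA.
rewrite /gZ (fZ_split Z pQ) hR.
case: ifP => hZp; last by rewrite (fZ_dep _ (negbT hZp)) subr0 addr0.
rewrite eQ (dim_addl dp pZ).
have h1 : ((\dim Z).+1 <= rho (Z + vs Q))%N.
  by rewrite -(dim_addl dp pZ) -(eqP hZp) -eQ rho_mono // addvSl.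
have -> : (rho (Z + vs Q) - \dim Z = (rho (Z + vs Q) - (\dim Z).+1).+1)%N by lia.
by rewrite exprS mulrBr mulN1r !mulNr opprK.
Qed.

Lemma eq_addp Z X p : (Z + X + p = Z + (p + X))%VS.
Proof. by rewrite -addvA [(X + p)%VS]addvC. Qed.

Lemma rho_dep_add Z p : qindependent rho Z -> \dim p = 1%N -> ~~ (p <= Z)%VS ->
  ~~ qindependent rho (Z + p) -> rho (Z + p) = rho Z.
Proof.
move=> /eqP hZ dp pZ hZp; have := rho_mono (addvSl Z p).
have := rho_le (Z + p); rewrite (dim_addl dp pZ) hZ; move: hZp; rewrite /qindependent.
rewrite (dim_addl dp pZ); move=> /eqP; lia.
Qed.

Lemma gZ_ge0 Q : Q \subset lines -> forall Z : V, qindependent rho Z -> 0 <= gZ Z Q.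
Proof.
have [k hk] : exists k, (#|Q| < k)%N by exists #|Q|.+1.
elim: k Q hk => [//|k IH] Q hk hQ Z hZ.
case: (set_0Vmem Q) => [-> | [p pQ]].
  by rewrite /gZ fZ0 // /vs big_set0 addv0 (eqP hZ) subnn expr0 mul1r.
have pl : p \in lines by apply: (subsetP hQ).
have dp : \dim p = 1%N by move: pl; rewrite inE => /eqP.
have hk' : (#|Q :\ p| < k)%N by move: hk; rewrite (cardsD1 p Q) pQ.
have hQ' : Q :\ p \subset lines by apply: subset_trans hQ; apply: subsetDl.
have IH' := IH _ hk' hQ'.
have eA : (Z + vs (Q :\ p) + p = Z + vs Q)%VS by rewrite eq_addp -vsD1.
case pZ: (p <= Z)%VS.
  by rewrite /gZ (fZ_split Z pQ) (addv_idPl pZ) subrr mulr0.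
case hZp: (qindependent rho (Z + p)).
  have [hR|hR] := eqVneq (rho (Z + vs (Q :\ p))) (rho (Z + vs Q)).
    rewrite (gZ_step hZ pl pQ (negbT pZ) hR) hZp; apply: addr_ge0; exact: IH'.
  have hlt : (rho (Z + vs (Q :\ p)) < rho (Z + vs Q))%N.
    by rewrite ltn_neqAle hR -eA rho_mono // addvSl.
  rewrite /gZ (fZ_split Z pQ) -(fZ_cone (p := p)) ?subrr ?mulr0 //.
  move=> T hT; apply/idP/idP => hI; last first.
    by apply: indep_sub hI; apply: addvS (addvSl _ _) (subvv _).
  have AA : (Z + vs T <= Z + vs (Q :\ p))%VS by apply: addvS (subvv _) (vs_sub hT).
  have := dimr_return p AA; rewrite eA.
  have := rho_le (Z + vs T + p); have := dim_add_le (Z + vs T) p.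
  move: hI; rewrite /qindependent -addvA [(vs T + p)%VS]addvC addvA.
  move=> /eqP hI; rewrite dp hI; move: hlt; rewrite /qindependent; lia.
have hR : rho (Z + vs (Q :\ p)) = rho (Z + vs Q).
  have := rho_mono (addvSl (Z + vs (Q :\ p)) p); rewrite eA.
  have := dimr_return p (addvSl Z (vs (Q :\ p))); rewrite eA.
  rewrite (rho_dep_add hZ dp (negbT pZ) (negbT hZp)); lia.
by rewrite (gZ_step hZ pl pQ (negbT pZ) hR) hZp addr0; apply: IH'.
Qed.

Lemma gZ_del_le Z Q x : qindependent rho Z -> Q \subset lines -> x \in Q ->
  ~~ (x <= Z)%VS -> (x <= Z + vs (Q :\ x))%VS -> gZ Z (Q :\ x) <= gZ Z Q.
Proof.
move=> hZ hQ xQ xZ xS.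
have hR : rho (Z + vs (Q :\ x)) = rho (Z + vs Q).
  by rewrite -[in LHS](addv_idPl xS) eq_addp -vsD1.
rewrite (gZ_step hZ (subsetP hQ _ xQ) xQ xZ hR) lerDl.
case: ifP => // hZx; apply: gZ_ge0 => //; apply: subset_trans hQ; exact: subsetDl.
Qed.

Lemma gZ_con_le Z Q x : qindependent rho Z -> Q \subset lines -> x \in Q ->
  ~~ (x <= Z)%VS -> (x <= Z + vs (Q :\ x))%VS -> qindependent rho (Z + x) ->
  gZ (Z + x) (Q :\ x) <= gZ Z Q.
Proof.
move=> hZ hQ xQ xZ xS hZx.
have hR : rho (Z + vs (Q :\ x)) = rho (Z + vs Q).
  by rewrite -[in LHS](addv_idPl xS) eq_addp -vsD1.
rewrite (gZ_step hZ (subsetP hQ _ xQ) xQ xZ hR) hZx lerDr.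
apply: gZ_ge0 => //; apply: subset_trans hQ; exact: subsetDl.
Qed.

Lemma gZ_delset Z Q R : qindependent rho Z -> Q \subset lines -> R \subset Q ->
  (forall x, x \in R -> ~~ (x <= Z)%VS /\ (x <= Z + vs (Q :\: R))%VS) ->
  gZ Z (Q :\: R) <= gZ Z Q.
Proof.
move=> hZ; have [k hk] : exists k, (#|R| < k)%N by exists #|R|.+1.
elim: k Q R hk => [//|k IH] Q R hk hQ hRQ hx.
case: (set_0Vmem R) => [-> | [x xR]]; first by rewrite setD0.
have xQ : x \in Q by apply: (subsetP hRQ).
have [xZ xS] := hx x xR.
have eD : (Q :\ x) :\: (R :\ x) = Q :\: R.
  by apply/setP => y; rewrite !inE; case: (y =P x) => [->|]; rewrite ?xR ?xQ.
apply: le_trans (gZ_del_le hZ hQ xQ xZ _).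
  rewrite -eD; apply: IH.
  - by move: hk; rewrite (cardsD1 x R) xR.
  - by apply: subset_trans hQ; exact: subsetDl.
  - by apply/subsetP => y; rewrite !inE => /andP[-> /(subsetP hRQ) ->].
  - by move=> y; rewrite in_setD1 eD => /andP[_ /hx].
apply: subv_trans xS _; apply: addvS (subvv _) (vs_sub _).
by apply/subsetP => y; rewrite !inE => /andP[yR yQ]; rewrite yQ andbT; apply: contraNneq yR => ->.
Qed.

Lemma rho_closure Z (S : {set V}) : (forall p, p \in S -> rho (Z + p) = rho Z) -> rho (Z + vs S) = rho Z.
Proof.
move=> H; rewrite /vs; apply: (big_rec (fun X => rho (Z + X)%VS = rho Z)); first by rewrite addv0.
move=> x X xS IHx; rewrite -eq_addp; apply/eqP; rewrite eqn_leq.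
have := dimr_return x (addvSl Z X); have := rho_mono (addvSl (Z + X) x).
rewrite IHx H //; lia.
Qed.

Lemma vs_lines : vs lines = fullv.
Proof.
apply/eqP; rewrite eqEsubv subvf /=; apply/subvP => v _.
have [->|nz] := eqVneq v 0; first exact: mem0v.
have : <[v]>%VS \in lines by rewrite inE dim_vline nz.
move/mem_vs/subvP; apply; exact: memv_line.
Qed.

Definition QZ Z := [set x in lines | ~~ (x <= Z)%VS].

Lemma gZ_final Z : qindependent rho Z -> \dim Z = rho fullv -> forall Q, Q \subset lines ->
  (forall x, x \in Q -> ~~ (x <= Z)%VS) -> gZ Z Q = 1.
Proof.
move=> hZ dZ Q hQ hx.
have dep : forall T, T \subset Q -> T != set0 -> ~~ qindependent rho (Z + vs T).
  move=> T TQ /set0Pn [x xT]; apply/negP => /eqP hI.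
  have h1 := rho_mono (subvf (Z + vs T)).
  have : (Z + vs T == Z)%VS.
    rewrite eq_sym eqEdim addvSl /=; rewrite -hI; lia.
  move/eqP => E; have := hx x (subsetP TQ _ xT); rewrite -E.
  by rewrite (subv_trans (mem_vs xT)) ?addvSr.
rewrite /gZ /fZ (bigD1 set0) ?sub0set //= big1; last first.
  by move=> T /andP[TQ Tn]; rewrite (negbTE (dep T TQ Tn)).
rewrite /vs big_set0 addv0 hZ cards0 expr0 addr0 mulr1.
have h1 := rho_mono (subvf (Z + \sum_(X in Q) X)%VS).
have h2 := rho_mono (addvSl Z (\sum_(X in Q) X)%VS).
rewrite (eqP hZ) in h2.
have -> : (rho (Z + \sum_(X in Q) X)%VS - \dim Z = 0)%N by lia.
by rewrite expr0.
Qed.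

Lemma dim_full : \dim (fullv : V) = n.
Proof. rewrite dimvf (dim_matrix F 1 n); exact: mul1n. Qed.

Lemma exists_aug Z : qindependent rho Z -> (\dim Z < rho fullv)%N ->
  exists2 p, p \in lines & ~~ (p <= Z)%VS && qindependent rho (Z + p).
Proof.
move=> hZ hlt.
case: (boolP [exists x in lines, ~~ (x <= Z)%VS && qindependent rho (Z + x)]) => [/exists_inP [p pl h] | /exists_inPn H]; first by exists p.
have := rho_closure (S := lines) (Z := Z) _; rewrite vs_lines addvC.
have -> : (fullv + Z)%VS = fullv by apply/addv_idPl; exact: subvf.
move=> /(_ _) E.
suff h : rho fullv = rho Z by move: hlt; rewrite h (eqP hZ) ltnn.
apply: E => p pl; have := H p pl; rewrite negb_and negbK.
case pZ: (p <= Z)%VS => /= hd; first by rewrite (addv_idPl pZ).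
by apply: rho_dep_add => //; [move: pl; rewrite inE => /eqP | rewrite pZ].
Qed.

Lemma gZ_path : (rho fullv < n)%N \/ n = 0%N -> forall m Z, qindependent rho Z ->
  (rho fullv - \dim Z = m)%N -> 1 <= gZ Z (QZ Z).
Proof.
move=> hrn m; elim: m => [|m IH] Z hZ hm.
  have h1 := rho_mono (subvf Z); rewrite (eqP hZ) in h1.
  rewrite gZ_final //; [lia | by apply/subsetP => x; rewrite inE => /andP[] |].
  by move=> x; rewrite inE => /andP[].
have hlt : (\dim Z < rho fullv)%N by lia.
have [p pl /andP[pZ hZp]] := exists_aug hZ hlt.
have dp : \dim p = 1%N by move: pl; rewrite inE => /eqP.
have dZp := dim_addl dp pZ.
set R := [set x in QZ Z | (x <= Z + p)%VS && (x != p)].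
have pQ1 : p \in QZ Z :\: R by rewrite in_setD [p \in R]inE eqxx !andbF /= [p \in QZ Z]inE pl pZ.
have hQZ : forall Y, QZ Y \subset lines by move=> Y; apply/subsetP => x; rewrite inE => /andP[].
have e1 : (QZ Z :\: R) :\ p = QZ (Z + p).
  apply/setP => x; rewrite !inE; case: (x =P p) => [->|xp] /=.
    by rewrite addvSr andbF.
  case xZp: (x <= Z + p)%VS; rewrite ?andbF ?andbT //=.
    by case: (\dim x == 1%N); case: (x <= Z)%VS.
  case xZ: (x <= Z)%VS; rewrite ?andbF ?andbT //.
  by move: xZp; rewrite (subv_trans xZ (addvSl _ _)).
have pS : (p <= vs (QZ (Z + p)))%VS.
  set u := vpick p.
  have up : u \in p by exact: memv_pick.
  have unz : u != 0 by rewrite vpick0 -dimv_eq0 dp.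
  have Ep : (<[u]> == p)%VS by rewrite eqEdim -memvE up dim_vline unz dp.
  rewrite -{1}(eqP Ep) -memvE.
  have : ~~ (fullv <= Z + p)%VS.
    have := rho_le fullv; rewrite dim_full => hf.
    apply/negP => /dimvS; rewrite dim_full dZp; case: hrn => hrn; lia.
  case/subvPn => w _ wZ.
  have uZ : u \in (Z + p)%VS by apply: (subvP (addvSr Z p)).
  have uwZ : u + w \notin (Z + p)%VS.
    apply: contra wZ => h; have := memvB h uZ; by rewrite [u + w]addrC addrK.
  have wnz : w != 0 by apply: contraNneq wZ => ->; rewrite mem0v.
  have uwnz : u + w != 0 by apply: contraNneq uwZ => ->; rewrite mem0v.
  have l1 : <[w]>%VS \in QZ (Z + p).
    by rewrite !inE dim_vline wnz /= -memvE.
  have l2 : <[u + w]>%VS \in QZ (Z + p).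
    by rewrite !inE dim_vline uwnz /= -memvE.
  have : u \in (<[u + w]> + <[w]>)%VS.
    have E : (u + w) - w = u by rewrite addrK.
    by rewrite -{1}E; apply: memv_add; rewrite ?memvN memv_line.
  apply/subvP; rewrite subv_add !mem_vs //.
have hQ1 : QZ Z :\: R \subset lines by apply: subset_trans (hQZ Z); exact: subsetDl.
have RQ : R \subset QZ Z by apply/subsetP => y; rewrite inE => /andP[].
apply: (le_trans _ (gZ_delset hZ (hQZ Z) RQ _)); last first.
  move=> x; rewrite !inE => /andP[/andP[xl xZ] /andP[xZp xp]]; split => //.
  have h2 : (Z + p <= Z + vs (QZ Z :\: R))%VS by rewrite addvS ?subvv ?mem_vs.
  exact: subv_trans xZp h2.
apply: (le_trans _ (gZ_con_le hZ hQ1 pQ1 pZ _ hZp)); last first.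
  by rewrite e1; apply: subv_trans pS (addvSr _ _).
rewrite e1; apply: IH; first by [].
by rewrite dZp; lia.
Qed.

Definition nzi X := (X != 0%VS) && qindependent rho X.
Definition vsup X Y := vproper Y X.
Definition Dn k I : nat := (\sum_(s : k.-tuple V) (all (fun X => X != 0%VS) s && path vsup I s))%N.
Definition Nc k : nat := (\sum_(t : k.-tuple V) (all nzi t && sorted vsup t))%N.

Lemma vsup_trans : transitive vsup.
Proof.
move=> y x z; rewrite /vsup /vproper => /andP[yx nyx] /andP[zy nzy].
rewrite (subv_trans zy yx) /=; apply: contraNneq nyx => ezx.
by apply/eqP; apply: subv_anti; rewrite yx -ezx zy.
Qed.

Lemma vsup_irr : irreflexive vsup.
Proof. by move=> x; rewrite /vsup /vproper eqxx andbF. Qed.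

Lemma nchainsE k : nchains rho k = Nc k.
Proof.
rewrite /nchains -sum1dep_card big_mkcond /Nc /=.
have hinj : injective (fun t : k.-tuple V => [tuple of rev t]).
  by move=> t1 t2 /(congr1 val) /= /(congr1 rev); rewrite !revK => /val_inj.
rewrite (reindex_inj hinj) /=; apply: eq_bigr => t _.
rewrite all_rev rev_sorted.
by case: (_ && _).
Qed.

Lemma Dn0 I : Dn 0 I = 1%N.
Proof. by rewrite /Dn (sum_tuple0 (fun s : seq V => nat_of_bool (all (fun X => X != 0%VS) s && path vsup I s))). Qed.

Lemma Nc0 : Nc 0 = 1%N.
Proof. by rewrite /Nc (sum_tuple0 (fun s : seq V => nat_of_bool (all nzi s && sorted vsup s))). Qed.

Lemma DnS k I : Dn k.+1 I = (\sum_(x : V) ((x != 0%VS) && vsup I x) * Dn k x)%N.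
Proof.
rewrite /Dn (@sum_tupleS _ k (fun s : seq V => nat_of_bool (all (fun X => X != 0%VS) s && path vsup I s))); apply: eq_bigr => x _; rewrite big_distrr /=.
apply: eq_bigr => s _ /=.
by case: (x != 0%VS); case: (vsup I x); rewrite ?mul1n ?mul0n ?andbF.
Qed.

Lemma NcS k : Nc k.+1 = (\sum_(x : V) nzi x * Dn k x)%N.
Proof.
rewrite /Nc (@sum_tupleS _ k (fun s : seq V => nat_of_bool (all nzi s && sorted vsup s))); apply: eq_bigr => x _; rewrite big_distrr /=.
apply: eq_bigr => s _ /=.
case hp: (path vsup x s); rewrite ?andbF ?muln0 //.
case hx: (nzi x); rewrite ?mul0n //= mul1n !andbT.
have hall := order_path_min vsup_trans hp.
congr nat_of_bool; apply: eq_in_all => y ys.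
have := allP hall y ys; rewrite /vsup /vproper => /andP[yx _].
rewrite /nzi (indep_sub yx) ?andbT //.
by move: hx => /andP[].
Qed.

Lemma Dn_bound k (I : V) : (#|{: V}| <= k)%N -> Dn k I = 0%N.
Proof.
move=> hk; apply: big1 => s _; case hb: (_ && _) => //; move/andP: hb => [_ hp]; exfalso.
have u : uniq (I :: s) by apply: (sorted_uniq vsup_trans vsup_irr).
have h1 : (size (I :: s) <= #|{: V}|)%N by rewrite -(card_uniqP u) max_card.
rewrite /= size_tuple in h1.
by move: (leq_trans h1 hk); rewrite ltnn.
Qed.

Definition Aalt I : int := \sum_(k < #|{: V}|.+1) (-1) ^+ k * (Dn k I)%:R.

Lemma Aalt_rec I : Aalt I = 1 - \sum_(x | (x != 0%VS) && vsup I x) Aalt x.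
Proof.
rewrite /Aalt big_ord_recl /= Dn0 expr0 mul1r; congr (_ + _).
have E1 : forall i : 'I_#|{: V}|, (-1) ^+ (bump 0 i) * (Dn (bump 0 i) I)%:R =
    - \sum_(x | (x != 0%VS) && vsup I x) (-1) ^+ i * (Dn i x)%:R :> int.
  move=> i; have -> : bump 0 i = i.+1 by []. rewrite DnS exprS mulN1r mulNr natr_sum big_distrr /=; congr (- _).
  rewrite [RHS]big_mkcond /=; apply: eq_bigr => x _.
  by case: (_ && _); rewrite ?mul1n ?mul0n ?mulr0.
rewrite (eq_bigr _ (fun i _ => E1 i)) sumrN exchange_big /=; congr (- _).
by apply: eq_bigr => x _; rewrite [RHS]big_ord_recr /= Dn_bound // mulr0 addr0.
Qed.

Definition Bv I : int := \sum_(T : {set V} | (T \subset lines) && (vs T == I)) (-1) ^+ #|T|.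

Lemma alt_powerset (S : {set V}) : S != set0 -> \sum_(T : {set V} | T \subset S) ((-1) ^+ #|T| : int) = 0.
Proof.
case/set0Pn => p pS; rewrite (sum_split (fun T => (-1) ^+ #|T|) pS) big1 // => T.
by rewrite subsetD1 => /andP[_ pT]; rewrite cardsU1 pT add1n exprS mulN1r addrN.
Qed.

Lemma vs_eq0 T : T \subset lines -> (vs T == 0%VS) = (T == set0).
Proof.
move=> hT; apply/idP/idP => [h|/eqP ->]; last by rewrite /vs big_set0.
apply/negPn/negP => /set0Pn [x xT]; have := mem_vs xT; rewrite (eqP h) subv0 => /eqP x0.
by have := subsetP hT x xT; rewrite inE x0 dimv0.
Qed.

Lemma vs_leI T I : (vs T <= I)%VS = (T \subset [set x | (x <= I)%VS]).
Proof.
apply/idP/idP => [h|h].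
  by apply/subsetP => x xT; rewrite inE (subv_trans (mem_vs xT) h).
by apply/subv_sumP => x xT; have := subsetP h x xT; rewrite inE.
Qed.

Lemma Bsum I : I != 0%VS -> \sum_(x | (x <= I)%VS && (x != 0%VS)) Bv x = -1.
Proof.
move=> nI; rewrite /Bv.
pose P T := [&& T \subset lines, vs T <= I & vs T != 0]%VS.
have -> : \sum_(x | (x <= I)%VS && (x != 0%VS))
    \sum_(T : {set V} | (T \subset lines) && (vs T == x)) ((-1) ^+ #|T| : int) =
    \sum_(x | (x <= I)%VS && (x != 0%VS)) \sum_(T | P T && (vs T == x)) (-1) ^+ #|T|.
  apply: eq_bigr => x /andP[xI nx]; apply: eq_bigl => T.
  by rewrite /P; case: (vs T =P x) => [->|_]; rewrite ?eqxx ?andbF // xI nx !andbT.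
rewrite -(partition_big (P := P) vs (fun x => (x <= I)%VS && (x != 0%VS))); last by move=> T /and3P[_ -> ->].
set LI := [set x in lines | (x <= I)%VS].
rewrite (eq_bigl (fun T => (T \subset LI) && (T != set0))); last first.
  move=> T; rewrite /P; apply/idP/idP.
    case/and3P => hl hI h0; rewrite -(vs_eq0 hl) h0 andbT.
    apply/subsetP => x xT; rewrite inE (subsetP hl x xT) /=.
    exact: subv_trans (mem_vs xT) hI.
  case/andP => hL h0.
  have hl : T \subset lines by apply: subset_trans hL _; apply/subsetP => x; rewrite inE => /andP[].
  rewrite hl (vs_eq0 hl) h0 andbT /=; apply/subv_sumP => x xT.
  by have := subsetP hL x xT; rewrite inE => /andP[].
have nLI : LI != set0.
  apply/set0Pn; exists <[vpick I]>%VS; rewrite !inE dim_vline vpick0 nI /=.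
  by rewrite -memvE memv_pick.
have := alt_powerset nLI; rewrite (bigD1 set0) ?sub0set //= cards0 expr0 => h.
by apply/eqP; rewrite -subr_eq0 opprK addrC h.
Qed.

Lemma A_eq_B I : I != 0%VS -> Aalt I = - Bv I.
Proof.
have [d hd] : exists d, (\dim I < d)%N by exists (\dim I).+1.
elim: d I hd => [//|d IH] I hd nI.
rewrite Aalt_rec.
rewrite (eq_bigr (fun x => - Bv x)); last first.
  move=> x /andP[nx]; rewrite /vsup /vproper => /andP[xI neq]; apply: IH => //.
  have : (\dim x < \dim I)%N.
    rewrite ltn_neqAle dimvS // andbT; apply: contra neq => /eqP e.
    by rewrite eqEdim xI e leqnn.
  by move: hd; lia.
rewrite sumrN opprK.
have := Bsum nI; rewrite (bigD1 I) ?subvv ?nI //=.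
rewrite (eq_bigl (fun x => (x != 0%VS) && vsup I x)); last first.
  move=> x; rewrite /vsup /vproper.
  by case: (x <= I)%VS; case: (x != 0%VS); case: (x != I).
move=> h; apply/eqP; rewrite -subr_eq0 opprK; apply/eqP.
by rewrite -addrA [_ + Bv I]addrC h subrr.
Qed.

Lemma indep0 : qindependent rho 0%VS.
Proof. by apply/eqP; have := rho_le 0%VS; rewrite dimv0; lia. Qed.

Lemma chiE : chi_order_complex rho = - fZ 0%VS lines.
Proof.
rewrite /chi_order_complex big_ord_recl /= nchainsE Nc0 expr1 mulN1r.
have E1 : forall i : 'I_#|{: V}|.+1, (-1) ^+ (bump 0 i).+1 * (nchains rho (bump 0 i))%:Z =
    \sum_(x | nzi x) (-1) ^+ i * (Dn i x)%:R :> int.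
  move=> i; have -> : bump 0 i = i.+1 by [].
  rewrite nchainsE NcS -natz natr_sum big_distrr /= !exprS !mulN1r opprK.
  rewrite [RHS]big_mkcond /=; apply: eq_bigr => x _; rewrite ?opprK.
  by case: (nzi x); rewrite ?mul1n ?mul0n ?mulr0.
rewrite (eq_bigr _ (fun i _ => E1 i)) exchange_big /=.
rewrite (eq_bigr (fun x => - Bv x)); last first.
  move=> x /andP[nx _]; rewrite -A_eq_B //.
rewrite sumrN /fZ.
rewrite (eq_bigr (fun T => if qindependent rho (vs T) then (-1) ^+ #|T| else 0)); last first.
  by move=> T _; rewrite add0v.
rewrite -big_mkcondr /=.
rewrite (partition_big vs (qindependent rho)); last by move=> T /andP[].
have H0 : \sum_(T : {set V} | ((T \subset lines) && qindependent rho (vs T)) && (vs T == 0%VS))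
    ((-1) ^+ #|T| : int) = 1.
  rewrite (big_pred1 set0) ?cards0 ?expr0 // => T.
  apply/idP/idP; first by case/andP => /andP[hT _]; rewrite (vs_eq0 hT).
  move/eqP => ->; rewrite sub0set /= (vs_eq0 (sub0set _)) eqxx andbT.
  have -> : vs set0 = 0%VS by rewrite /vs big_set0.
  exact: indep0.
rewrite [in RHS](bigD1 0%VS) ?indep0 //= H0 opprD; congr (_ - _).
apply: eq_big => [x|x /andP[_ hx]]; first by rewrite /nzi andbC.
apply: eq_bigl => T; case: eqP => [->|_]; last by rewrite !andbF.
by rewrite hx !andbT.
Qed.
End QM.

Unset Implicit Arguments.
Local Open Scope ring_scope.
Theorem proposition5p5 (F : finFieldType) (n : nat)
  (rho : qspace F n -> nat) (r : nat)
  (hM : is_qmatroid rho) (hr : rho fullv = r)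
  (hnone : ~ (exists v : 'rV[F]_n, v != 0 /\
               (forall B : qspace F n, qbasis rho B -> v \in B))) :
  chi_order_complex rho != 0.
Proof.
rewrite (chiE hM) oppr_eq0.
have hrn : (rho fullv < n)%N \/ n = 0%N.
  case: (posnP n) => [n0|npos]; [by right | left].
  have hle := rho_le hM fullv; rewrite dim_full in hle.
  rewrite ltn_neqAle hle andbT; apply/negP => /eqP heq.
  have hfi : qindependent rho fullv by rewrite /qindependent dim_full heq.
  apply: hnone; exists (vpick fullv); split.
    by rewrite vpick0 -dimv_eq0 dim_full -lt0n.
  move=> B [hB hmax]; rewrite -(hmax _ hfi (subvf B)); exact: memv_pick.
have := gZ_path hM hrn (indep0 hM) (erefl _).
have -> : QZ 0%VS = @lines F n.
  apply/setP => x; rewrite !inE subv0; case: (x =P 0%VS) => [->|_]; last by rewrite andbT.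
  by rewrite dimv0.
rewrite /gZ; apply: contraTneq => ->; rewrite mulr0.
by [].
Qed.
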